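(* Let $H$ be a multigraph of even order $p\ge 4$ and let $d\ge 2$ be an integer. Suppose there is a vertex $s$ with $\deg(s)\le d$, every other vertex has degree $d$ or $d+1$, and exactly $r \le d$ vertices have degree $d+1$. Suppose there exists $R \subsetneq V(H)\setminus\{s\}$ with $|R|$ odd, $|R|\ge 3$, $|\partial_H(R)| \le d$ and $\operatorname{sl}(\langle R\rangle, d) \le \operatorname{sl}(H-s, d)$. If $\Gamma(H)\le d+1$, then there is a subset $S\subseteq V(H)$ with $|S|$ odd and $1<|S|<p-1$ such that $\Delta(H_S)\le d+1$, $\Gamma(H_S)\le d+1$, and $H_S$ has at most $r$ vertices of degree $d+1$; and similarly $\Delta(H_{S^c})\le d+1$, $\Gamma(H_{S^c})\le d+1$, and $H_{S^c}$ has at most $r$ vertices of degree $d+1$, where $S^c=V(H)\setminus S$.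
   Context: Multigraphs are finite and loopless, multiple edges allowed. For $S \subseteq V(H)$, $\langle S\rangle$ is the induced subgraph and $\partial_H(S)$ is the set of edges of $H$ with exactly one end in $S$. For a multigraph $K$ of odd order $n(K)\ge 3$ with $e(K)$ edges, $t(K) = 2e(K)/(n(K)-1)$, and the $k$-slack is $\operatorname{sl}(K,k) = (k+1)(n(K)-1)/2 - e(K)$. $\Gamma(H) = \max\{t(\langle R\rangle) : R\subseteq V(H), |R| \text{ odd}, |R|\ge 3\}$. Shrinking: for a nonempty proper subset $S$ of $V(H)$, $H_S$ has vertex set $(V(H)\setminus S)\cup\{s'\}$ for a new vertex $s'$; its edges are the edges of $H - S$ together with, for each $u \notin S$, exactly as many edges $us'$ as there are edges of $H$ joining $u$ to vertices of $S$. *)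

(* Defs.v *)
From mathcomp Require Import all_boot all_order all_algebra.
Set Implicit Arguments. Unset Strict Implicit. Unset Printing Implicit Defensive.
Import Order.TTheory GRing.Theory Num.Theory.

(* A finite loopless multigraph on the vertex type T is given by an edge
   multiplicity function m : T -> T -> nat that is symmetric and zero on the
   diagonal.  Subgraphs/auxiliary graphs are described by a vertex set
   V : {set T} together with m (only entries between vertices of V matter). *)
Definition multigraph (T : finType) (m : T -> T -> nat) : Prop :=
  (forall u w, m u w = m w u) /\ (forall u, m u u = 0%N).

Section Params.
Variable T : finType.
Implicit Types (V R S : {set T}) (m : T -> T -> nat).

Definition deg V m (v : T) : nat := \sum_(u in V) m v u.

(* number of edges e(<V>) (each edge counted twice in the double sum) *)
Definition ecount V m : nat := (\sum_(u in V) \sum_(w in V) m u w)./2.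

Definition maxdeg V m : nat := \max_(v in V) deg V m v.

Definition nb_deg V m (k : nat) : nat := #|[set v in V | deg V m v == k]|.

Definition bnd V m R : nat := \sum_(u in R) \sum_(w in V :\: R) m u w.

Definition tK V m : rat := ((2 * ecount V m)%:R / (#|V|.-1)%:R)%R.

Definition slack V m (k : nat) : rat :=
  (((k.+1 * #|V|.-1)%:R / 2%:R) - (ecount V m)%:R)%R.

(* Gamma(H) = max of t(<R>) over R subset of V(H), |R| odd, |R| >= 3
   (the default 0 is irrelevant for the bounds considered). *)
Definition Gam V m : rat :=
  (\big[Num.max/0%R]_(R : {set T} | (R \subset V) && odd #|R| && (2 < #|R|)%N)
     tK R m)%R.
End Params.

(* Shrinking S to a new vertex s' (represented by None); old vertex x is Some x. *)
Definition shrinkV (T : finType) (S : {set T}) : {set option T} :=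
  None |: [set Some x | x in ~: S].

Definition shrinkM (T : finType) (S : {set T}) (m : T -> T -> nat)
  (x y : option T) : nat :=
  match x, y with
  | Some u, Some w => m u w
  | Some u, None => \sum_(w in S) m u w
  | None, Some w => \sum_(u in S) m u w
  | None, None => 0%N
  end.

(* Main.v *)
Require Import Defs.
From mathcomp Require Import all_boot all_order all_algebra zify lra.
Import Order.TTheory GRing.Theory Num.Theory.
Set Implicit Arguments. Unset Strict Implicit. Unset Printing Implicit Defensive.

Lemma sum_opt (T : finType) (W : {set option T}) (F : option T -> nat) :
  \sum_(x in W) F x = (None \in W) * F None + \sum_(x in [set x | Some x \in W]) F (Some x).
Proof.
rewrite (big_setID [set None]) /=.
have -> : W :\: [set None] = Some @: [set x | Some x \in W].
  apply/setP => -[x|]; rewrite !inE.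
    by rewrite (mem_imset _ _ (@Some_inj _)) inE.
  by apply/esym/negbTE/imsetP => -[y _].
rewrite big_imset /=; last by move=> x y _ _ [].
case: (boolP (None \in W)) => HN.
  have -> : W :&: [set None] = [set None] by apply/setP => x; rewrite !inE; case: eqP => [->|]; rewrite ?andbT ?andbF.
  by rewrite big_set1 mul1n.
have -> : W :&: [set None] = set0 by apply/setP => x; rewrite !inE; case: eqP => [->|]; rewrite ?andbT ?andbF ?(negbTE HN).
by rewrite big_set0.
Qed.

Definition E (T : finType) (m : T -> T -> nat) (A B : {set T}) :=
  \sum_(u in A) \sum_(w in B) m u w.

Lemma E_sym (T : finType) (m : T -> T -> nat) A B :
  multigraph m -> E m A B = E m B A.
Proof.
move=> [Hs _]; rewrite /E exchange_big; apply eq_bigr => u _; apply eq_bigr => w _; exact: Hs.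
Qed.

Lemma sumU (T : finType) (F : T -> nat) (A B : {set T}) :
  A :&: B = set0 -> \sum_(w in A :|: B) F w = \sum_(w in A) F w + \sum_(w in B) F w.
Proof.
move=> H0; rewrite (big_setID A) /=; congr (_ + _); apply: eq_bigl => x.
  by rewrite !inE; case: (boolP (x \in A)) => /=; rewrite ?andbF.
rewrite !inE; case: (boolP (x \in A)) => //= xA.
apply/esym/negbTE; apply/negP => xB.
have : x \in A :&: B by rewrite inE xA.
by rewrite H0 inE.
Qed.

Lemma E_Ul (T : finType) (m : T -> T -> nat) (A B C : {set T}) :
  A :&: B = set0 -> E m (A :|: B) C = E m A C + E m B C.
Proof. by move=> H0; rewrite /E sumU. Qed.

Lemma E_Ur (T : finType) (m : T -> T -> nat) (A B C : {set T}) :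
  A :&: B = set0 -> E m C (A :|: B) = E m C A + E m C B.
Proof. by move=> H0; rewrite /E -big_split; apply eq_bigr => u _; rewrite sumU. Qed.

Lemma E0l (T : finType) (m : T -> T -> nat) (C : {set T}) : E m set0 C = 0.
Proof. by rewrite /E big_set0. Qed.

Lemma E1 (T : finType) (m : T -> T -> nat) x : multigraph m -> E m [set x] [set x] = 0.
Proof. by move=> [_ H]; rewrite /E !big_set1 H. Qed.

Lemma D_even (T : finType) (m : T -> T -> nat) (A : {set T}) :
  multigraph m -> ~~ odd (E m A A).
Proof.
move=> Hm; move Hn: #|A| => n; elim: n A Hn => [|n IH] A HA.
  by move/eqP: HA; rewrite cards_eq0 => /eqP ->; rewrite E0l.
have [x xA] : exists x, x \in A by apply/set0Pn; rewrite -card_gt0 HA.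
have HU : A = [set x] :|: (A :\ x) by rewrite setD1K.
have H0 : [set x] :&: (A :\ x) = set0 by apply/setP => y; rewrite !inE; case: eqP.
rewrite HU E_Ul // !E_Ur // E1 // (@E_sym _ m (A :\ x) [set x] Hm).
have := IH (A :\ x); move: HA; rewrite (cardsD1 x A) xA add1n => -[->] /(_ erefl).
by rewrite add0n addnA addnn !oddD odd_double.
Qed.

Lemma ecountE (T : finType) (m : T -> T -> nat) (A : {set T}) :
  multigraph m -> 2 * ecount A m = E m A A.
Proof.
move=> Hm; rewrite /ecount -/(E m A A) mul2n.
have H := odd_double_half (E m A A); rewrite (negbTE (D_even A Hm)) add0n in H; exact H.
Qed.

Lemma in_shrinkS (T : finType) (S : {set T}) x : (Some x \in shrinkV S) = (x \notin S).
Proof. by rewrite /shrinkV !inE /= (mem_imset _ _ (@Some_inj _)) inE. Qed.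

Lemma in_shrinkN (T : finType) (S : {set T}) : None \in shrinkV S.
Proof. by rewrite /shrinkV !inE. Qed.

Lemma pre_shrink (T : finType) (S : {set T}) : [set x | Some x \in shrinkV S] = ~: S.
Proof. by apply/setP => x; rewrite inE in_shrinkS inE. Qed.

Lemma shrink_mg (T : finType) (S : {set T}) m : multigraph m -> multigraph (shrinkM S m).
Proof.
move=> [Hs Hd]; split.
  move=> [u|] [w|] //=; apply eq_bigr => ? _; exact: Hs.
by move=> [u|] //=.
Qed.

Lemma deg_shrinkN (T : finType) (S : {set T}) m :
  deg (shrinkV S) (shrinkM S m) None = bnd [set: T] m S.
Proof.
rewrite /deg sum_opt in_shrinkN pre_shrink /= mul1n add0n /bnd setTD exchange_big.
by [].
Qed.

Lemma deg_shrinkS (T : finType) (S : {set T}) m x :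
  deg (shrinkV S) (shrinkM S m) (Some x) = deg [set: T] m x.
Proof.
rewrite /deg sum_opt in_shrinkN pre_shrink /= mul1n [RHS](big_setID S) /= setTI setTD.
by [].
Qed.

Lemma card_opt (T : finType) (W : {set option T}) :
  #|W| = (None \in W) + #|[set x | Some x \in W]|.
Proof. by rewrite -!sum1_card sum_opt muln1. Qed.

Lemma D_shrink (T : finType) (S : {set T}) m (W : {set option T}) :
  multigraph m ->
  E (shrinkM S m) W W = E m [set x | Some x \in W] [set x | Some x \in W]
      + (None \in W) * 2 * E m [set x | Some x \in W] S.
Proof.
move=> Hm; set W0 := [set x | Some x \in W].
rewrite /E sum_opt.
rewrite sum_opt /= muln0 add0n.
have Hin : forall x, \sum_(w in W) shrinkM S m (Some x) w =
   (None \in W) * \sum_(w in S) m x w + \sum_(w in W0) m x w by move=> x; rewrite sum_opt.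
rewrite [X in _ + X](eq_bigr _ (fun x _ => Hin x)).
rewrite big_split /= -big_distrr /= -/(E m W0 W0) -/(E m S W0) -/(E m W0 S).
have -> : \sum_(x in W0) \sum_(u in S) m u x = E m W0 S by rewrite /E; apply eq_bigr => x _; apply eq_bigr => u _; case: Hm => Hs _; exact: Hs.
case: (None \in W); rewrite ?mul1n ?mul0n; lia.
Qed.

Lemma tK_le (T : finType) (V : {set T}) m (n : nat) :
  multigraph m -> (2 <= #|V|)%N -> (tK V m <= n%:R)%R = (E m V V <= n * #|V|.-1)%N.
Proof.
move=> Hm H2; rewrite /tK ecountE // ler_pdivrMr ?ltr0n; last by lia.
by rewrite -natrM ler_nat.
Qed.

Lemma Gam_ge (T : finType) (V R : {set T}) m :
  R \subset V -> odd #|R| -> (2 < #|R|)%N -> (tK R m <= Gam V m)%R.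
Proof.
move=> H1 H2 H3; rewrite /Gam (bigD1 R) /=; last by rewrite H1 H2 H3.
by rewrite le_max lexx.
Qed.

Lemma Gam_le (T : finType) (V : {set T}) m (c : rat) :
  (0 <= c)%R ->
  (forall R : {set T}, R \subset V -> odd #|R| -> (2 < #|R|)%N -> (tK R m <= c)%R) ->
  (Gam V m <= c)%R.
Proof.
move=> H0 H; rewrite /Gam; apply: (big_ind (fun x => x <= c)%R) => //.
  by move=> x y hx hy; rewrite ge_max hx hy.
by move=> R /andP [/andP [h1 h2] h3]; apply: H.
Qed.

Lemma shrink_good (T : finType) (m : T -> T -> nat) (d r : nat) (S : {set T}) :
  multigraph m ->
  (forall v, deg [set: T] m v <= d.+1)%N ->
  nb_deg [set: T] m d.+1 = r ->
  (forall W : {set T}, odd #|W| -> (3 <= #|W|)%N -> E m W W <= d.+1 * #|W|.-1)%N ->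
  (bnd [set: T] m S <= d)%N ->
  (forall W0 : {set T}, W0 \subset ~: S -> ~~ odd #|W0| -> (2 <= #|W0|)%N ->
       E m W0 W0 + 2 * E m W0 S <= d.+1 * #|W0|)%N ->
  [/\ (maxdeg (shrinkV S) (shrinkM S m) <= d.+1)%N,
      (Gam (shrinkV S) (shrinkM S m) <= (d.+1)%:R)%R &
      (nb_deg (shrinkV S) (shrinkM S m) d.+1 <= r)%N].
Proof.
move=> Hm Hdeg Hr HG Hb HO; split.
- apply/bigmax_leqP => -[x|] _; first by rewrite deg_shrinkS.
  by rewrite deg_shrinkN; lia.
- apply: Gam_le => // W HW Hodd H3.
  have Hm' := shrink_mg S Hm.
  rewrite tK_le //; last by lia.
  rewrite D_shrink //.
  set W0 := [set x | Some x \in W].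
  have HW0 : W0 \subset ~: S.
    apply/subsetP => x; rewrite inE => /(subsetP HW); by rewrite in_shrinkS inE.
  move: Hodd H3; rewrite card_opt -/W0.
  case: (None \in W) => /= Hodd H3.
    rewrite mul1n; apply: HO => //; lia.
  rewrite mul0n addn0; apply: HG => //.
- rewrite -Hr /nb_deg.
  have -> : #|[set v in [set: T] | deg [set: T] m v == d.+1]| =
            #|Some @: [set v in [set: T] | deg [set: T] m v == d.+1]|.
    by rewrite card_imset //; exact: Some_inj.
  apply: subset_leq_card; apply/subsetP => -[x|]; rewrite !inE.
    rewrite deg_shrinkS => /andP [_ H]; rewrite (mem_imset _ _ (@Some_inj _)) inE /= H //; by rewrite inE.
  move=> /andP [_ /eqP H]; have := deg_shrinkN S m; lia.
Qed.

Lemma sig_le (T : finType) (m : T -> T -> nat) (K : nat) (A : {set T}) :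
  (forall v, deg [set: T] m v <= K)%N -> (E m A [set: T] <= K * #|A|)%N.
Proof.
move=> H; rewrite /E mulnC -sum_nat_const; apply: leq_sum => v _; exact: H.
Qed.

Lemma bndE (T : finType) (m : T -> T -> nat) (A : {set T}) : bnd [set: T] m A = E m A (~: A).
Proof. by rewrite /bnd setTD. Qed.

Lemma sigE (T : finType) (m : T -> T -> nat) (A : {set T}) :
  E m A [set: T] = E m A A + E m A (~: A).
Proof. by rewrite -E_Ur ?setUCr // setICr. Qed.

Lemma single (T : finType) (m : T -> T -> nat) (d : nat) (s : T) (A : {set T}) :
  multigraph m -> (forall v, v != s -> d <= deg [set: T] m v)%N ->
  s \notin A -> #|A| = 1%N -> (d <= E m A (~: A))%N.
Proof.
move=> Hm Hd sA /eqP /cards1P [v Hv]; subst A.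
have := sigE m [set v]; rewrite E1 // add0n => <-.
rewrite /E big_set1; apply: Hd; move: sA; rewrite inE eq_sym; exact: id.
Qed.

Lemma E_T (T : finType) (m : T -> T -> nat) (A B : {set T}) :
  E m A [set: T] = E m A B + E m A (~: B).
Proof. by rewrite -E_Ur ?setUCr // setICr. Qed.

Lemma cardU0 (T : finType) (A B : {set T}) : A :&: B = set0 -> #|A :|: B| = (#|A| + #|B|)%N.
Proof. by move=> H; rewrite cardsU H cards0 subn0. Qed.

Definition cand (T : finType) (m : T -> T -> nat) (d : nat) (s : T) (Y : {set T}) :=
  s \notin Y /\ odd #|Y| /\ (3 <= #|Y|)%N /\ Y != [set: T] :\ s /\ (E m Y (~: Y) <= d)%N /\
   (d.+1 * #|Y|.-1 + E m ([set: T] :\ s) ([set: T] :\ s)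
      <= d.+1 * #|[set: T] :\ s|.-1 + E m Y Y)%N.

Lemma step1 (T : finType) (m : T -> T -> nat) (d : nat) (s : T) (Y W : {set T}) :
  multigraph m -> (forall v, deg [set: T] m v <= d.+1)%N ->
  (forall v, v != s -> d <= deg [set: T] m v)%N ->
  cand m d s Y -> W \subset Y -> ~~ odd #|W| -> (2 <= #|W|)%N ->
  (d.+1 * #|W| < E m W W + 2 * E m W (~: Y))%N ->
  cand m d s (Y :\: W) /\ (E m (Y :\: W) (~: (Y :\: W)) < E m Y (~: Y))%N.
Proof.
move=> Hm Hdeg Hd [sY [oY [Y3 [YV [bY sl]]]]] WY oW W2 bad.
set Y' := Y :\: W.
have eY : Y = W :|: Y' by rewrite /Y' -{1}(setID Y W) (setIidPr WY).
have d1 : W :&: Y' = set0 by apply/setP => x; rewrite !inE; case: (x \in W).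
have eC : ~: Y' = W :|: ~: Y.
  apply/setP => x; rewrite !inE; move: (subsetP WY x).
  by case: (x \in W); case: (x \in Y) => // /(_ erefl).
have d2 : W :&: ~: Y = set0.
  apply/setP => x; rewrite !inE; move: (subsetP WY x).
  by case: (x \in W); case: (x \in Y) => // /(_ erefl).
have cY : #|Y| = (#|W| + #|Y'|)%N by rewrite {1}eY cardU0.
have e1 : E m Y (~: Y) = (E m W (~: Y) + E m Y' (~: Y))%N by rewrite {1}eY E_Ul.
have e2 : E m Y' (~: Y') = (E m Y' W + E m Y' (~: Y))%N by rewrite eC E_Ur.
have e3 : E m W [set: T] = (E m W W + E m W Y' + E m W (~: Y))%N.
  by rewrite (E_T m W Y) {1}eY E_Ur.
have e4 : E m Y Y = (E m W W + E m W Y' + E m Y' W + E m Y' Y')%N.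
  by rewrite {1 2}eY !E_Ul ?E_Ur //; lia.
have e5 := @E_sym _ m Y' W Hm.
have s1 := sig_le W Hdeg.
have Hlt : (E m Y' (~: Y') < E m Y (~: Y))%N by lia.
have Y'1 : #|Y'| != 1%N.
  apply/eqP => H1; have := single Hm Hd _ H1.
  have -> : s \notin Y' by rewrite inE negb_and sY orbT.
  move=> /(_ erefl); lia.
have oY' : odd #|Y'| by move: oY; rewrite cY oddD (negbTE oW).
have YVs : Y \subset [set: T] :\ s by apply/subsetP => x; rewrite !inE andbT => xY; apply/eqP => xs; move: sY; rewrite -xs xY.
have cYV := subset_leq_card YVs.
split; last by lia.
split; [|split; [|split; [|split; [|split]]]].
- by rewrite inE negb_and sY orbT.
- by [].
- move: oY' Y'1; case: #|Y'| => [|[|[|n]]] //=; by rewrite ?ltnS.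
- by apply/eqP => H; move: cYV; rewrite -H; lia.
- lia.
- nia.
Qed.

Lemma step2 (T : finType) (m : T -> T -> nat) (d : nat) (s : T) (Y W : {set T}) :
  multigraph m -> (forall v, deg [set: T] m v <= d.+1)%N ->
  cand m d s Y -> W \subset ~: Y -> s \notin W -> ~~ odd #|W| ->
  (d.+1 * #|W| < E m W W + 2 * E m W Y)%N ->
  cand m d s (Y :|: W) /\ (E m (Y :|: W) (~: (Y :|: W)) < E m Y (~: Y))%N.
Proof.
move=> Hm Hdeg [sY [oY [Y3 [YV [bY sl]]]]] WY sW oW bad.
set Y' := Y :|: W; set Z := ~: Y'.
have d1 : Y :&: W = set0.
  apply/setP => x; rewrite !inE; move: (subsetP WY x); rewrite inE.
  by case: (x \in W); case: (x \in Y) => // /(_ erefl).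
have d2 : W :&: Z = set0 by apply/setP => x; rewrite !inE; case: (x \in W); rewrite ?orbT ?andbF.
have eC : ~: Y = W :|: Z.
  apply/setP => x; rewrite !inE; move: (subsetP WY x); rewrite inE.
  by case: (x \in W); case: (x \in Y) => // /(_ erefl).
have cY : #|Y'| = (#|Y| + #|W|)%N by rewrite cardU0.
have e1 : E m Y (~: Y) = (E m Y W + E m Y Z)%N by rewrite eC E_Ur.
have e2 : E m Y' Z = (E m Y Z + E m W Z)%N by rewrite E_Ul.
have e3 : E m W [set: T] = (E m W Y + E m W W + E m W Z)%N by rewrite (E_T m W Y') E_Ur.
have e4 : E m Y' Y' = (E m Y Y + E m Y W + E m W Y + E m W W)%N.
  by rewrite !E_Ul ?E_Ur //; lia.
have e5 := @E_sym _ m Y W Hm.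
have s1 := sig_le W Hdeg.
have Hlt : (E m Y' Z < E m Y (~: Y))%N by lia.
have oY' : odd #|Y'| by rewrite cY oddD (negbTE oW) addbF.
have sl' : (d.+1 * #|Y'|.-1 + E m ([set: T] :\ s) ([set: T] :\ s)
      < d.+1 * #|[set: T] :\ s|.-1 + E m Y' Y')%N by nia.
split; last by [].
split; [|split; [|split; [|split; [|split]]]].
- by rewrite inE negb_or sY sW.
- by [].
- lia.
- by apply/eqP => H; move: sl'; rewrite H ltnn.
- change (E m Y' Z <= d)%N; lia.
- lia.
Qed.

Lemma step3 (T : finType) (m : T -> T -> nat) (d : nat) (s : T) (Y W : {set T}) :
  multigraph m -> (forall v, deg [set: T] m v <= d.+1)%N ->
  (forall v, v != s -> d <= deg [set: T] m v)%N -> ~~ odd #|T| ->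
  cand m d s Y -> W \subset ~: Y -> s \in W -> ~~ odd #|W| ->
  (d.+1 * #|W| < E m W W + 2 * E m W Y)%N ->
  cand m d s (~: (Y :|: W)) /\ (E m (~: (Y :|: W)) (~: ~: (Y :|: W)) < E m Y (~: Y))%N.
Proof.
move=> Hm Hdeg Hd oT [sY [oY [Y3 [YV [bY sl]]]]] WY sW oW bad.
set Y' := Y :|: W; set Z := ~: Y'; set Vs := [set: T] :\ s.
rewrite setCK.
have d1 : Y :&: W = set0.
  apply/setP => x; rewrite !inE; move: (subsetP WY x); rewrite inE.
  by case: (x \in W); case: (x \in Y) => // /(_ erefl).
have d2 : W :&: Z = set0 by apply/setP => x; rewrite !inE; case: (x \in W); rewrite ?orbT ?andbF.
have d3 : Y :&: Z = set0 by apply/setP => x; rewrite !inE; case: (x \in Y); rewrite ?andbF.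
have eC : ~: Y = W :|: Z.
  apply/setP => x; rewrite !inE; move: (subsetP WY x); rewrite inE.
  by case: (x \in W); case: (x \in Y) => // /(_ erefl).
have cT : #|T| = (#|Y| + #|W| + #|Z|)%N.
  by rewrite -cardU0 // -(cardsC Y').
have e1 : E m Y (~: Y) = (E m Y W + E m Y Z)%N by rewrite eC E_Ur.
have e2 : E m Z Y' = (E m Z Y + E m Z W)%N by rewrite E_Ur.
have e3 : E m W [set: T] = (E m W Y + E m W W + E m W Z)%N.
  by rewrite (E_T m W Y') E_Ur.
have eW : W = (W :\ s) :|: [set s] by rewrite setUC setD1K.
have dW : (W :\ s) :&: [set s] = set0 by apply/setP => x; rewrite !inE; case: eqP; rewrite ?andbF.
have e4 : E m W [set: T] = (E m (W :\ s) [set: T] + E m [set s] [set: T])%N.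
  by rewrite {1}eW E_Ul.
have cW : #|W :\ s| = #|W|.-1 by rewrite (cardsD1 s W) sW.
have s2 := sig_le (W :\ s) Hdeg.
have s3 := sig_le Y Hdeg.
have eVs : ~: Vs = [set s] by apply/setP => x; rewrite !inE andbT negbK.
have e5 : E m Vs [set: T] = (E m Vs Vs + E m Vs [set s])%N by rewrite (E_T m Vs Vs) eVs.
have eV : Vs = (Y :|: Z) :|: (W :\ s).
  apply/setP => x; rewrite !inE andbT; move: (subsetP WY x); rewrite inE.
  case: (boolP (x == s)) => [/eqP -> | xs] /=; first by rewrite sW (negbTE sY) => /(_ erefl).
  by case: (x \in W); case: (x \in Y) => // /(_ erefl).
have dV : (Y :|: Z) :&: (W :\ s) = set0.
  apply/setP => x; rewrite !inE; move: (subsetP WY x); rewrite inE.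
  by case: (x \in W); case: (x \in Y); rewrite ?andbF ?orbT //= => /(_ erefl).
have e6 : E m Vs [set: T] = (E m Y [set: T] + E m Z [set: T] + E m (W :\ s) [set: T])%N.
  by rewrite {1}eV !E_Ul.
have eS : E m [set s] [set: T] = E m [set s] Vs.
  by rewrite (E_T m [set s] [set s]) E1 // add0n -eVs setCK.
have e7 := @E_sym _ m Vs [set s] Hm.
have e8 := sigE m Z.
have eZ : ~: Z = Y' by rewrite setCK.
rewrite eZ in e8.
have e9 := @E_sym _ m Z Y Hm.
have e10 := @E_sym _ m Z W Hm.
have cVs : #|Vs| = #|T|.-1 by have := cardsD1 s [set: T]; rewrite inE cardsT -/Vs; lia.
have e11 := @E_sym _ m Y W Hm.
have s1 := sig_le W Hdeg.
have Hlt : (E m Z Y' < E m Y (~: Y))%N by lia.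
have sZ : s \notin Z by rewrite !inE sW orbT.
have oZ : odd #|Z|.
  move: oT; rewrite cT !oddD (negbTE oW) oY /=; by case: (odd #|Z|).
have Z1 : #|Z| != 1%N.
  apply/eqP => H1; have := single Hm Hd sZ H1; rewrite eZ; lia.
have Z3 : (3 <= #|Z|)%N by move: oZ Z1; case: #|Z| => [|[|[|n]]] //=; by rewrite ?ltnS.
have W1 : (1 <= #|W|)%N by rewrite card_gt0; apply/set0Pn; exists s.
have h1 : d.+1 * #|Vs|.-1 = d.+1 * #|Y| + d.+1 * #|W|.-1 + d.+1 * #|Z|.-1.
  have -> : #|Vs|.-1 = #|Y| + #|W|.-1 + #|Z|.-1 by lia.
  by rewrite !mulnDr.
have h2 : d.+1 * #|W| = d.+1 * #|W|.-1 + d.+1.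
  have {1}-> : #|W| = (#|W|.-1).+1 by lia.
  by rewrite mulnS addnC.
rewrite cW in s2.
split; last by [].
split; [|split; [|split; [|split; [|split]]]].
- by [].
- by [].
- by [].
- apply/eqP => H; move: cVs cT; rewrite /Vs -H; lia.
- rewrite eZ; lia.
- rewrite -/Vs h1; lia.
Qed.
Lemma slack_nat (T : finType) (V1 V2 : {set T}) m (k : nat) :
  (slack V1 m k <= slack V2 m k)%R ->
  (k.+1 * #|V1|.-1 + 2 * ecount V2 m <= k.+1 * #|V2|.-1 + 2 * ecount V1 m)%N.
Proof.
rewrite /slack.
move: (k.+1 * #|V1|.-1)%N (k.+1 * #|V2|.-1)%N (ecount V1 m) (ecount V2 m) => a b x y H.
rewrite -(ler_nat rat) !natrD.
lra.
Qed.

Definition concl (T : finType) (m : T -> T -> nat) (d r : nat) :=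
  exists S : {set T}, [/\ odd #|S|, (1 < #|S|)%N, (#|S| < #|T|.-1)%N,
    [/\ (maxdeg (shrinkV S) (shrinkM S m) <= d.+1)%N,
        (Gam (shrinkV S) (shrinkM S m) <= (d.+1)%:R)%R &
        (nb_deg (shrinkV S) (shrinkM S m) d.+1 <= r)%N] &
    [/\ (maxdeg (shrinkV (~: S)) (shrinkM (~: S) m) <= d.+1)%N,
        (Gam (shrinkV (~: S)) (shrinkM (~: S) m) <= (d.+1)%:R)%R &
        (nb_deg (shrinkV (~: S)) (shrinkM (~: S) m) d.+1 <= r)%N]].

Lemma main_ind (T : finType) (m : T -> T -> nat) (d r : nat) (s : T) :
  multigraph m -> (forall v, deg [set: T] m v <= d.+1)%N ->
  (forall v, v != s -> d <= deg [set: T] m v)%N -> ~~ odd #|T| ->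
  nb_deg [set: T] m d.+1 = r ->
  (forall W : {set T}, odd #|W| -> (3 <= #|W|)%N -> E m W W <= d.+1 * #|W|.-1)%N ->
  forall n (Y : {set T}), (E m Y (~: Y) < n)%N -> cand m d s Y -> concl m d r.
Proof.
move=> Hm Hdeg Hd oT Hr HG; elim=> [|n IH] Y // bn cY.
case: (pickP [pred W : {set T} | (W \subset ~: Y) && ~~ odd #|W| && (1 < #|W|)%N &&
                 (d.+1 * #|W| < E m W W + 2 * E m W Y)%N]) => [W | H1].
  rewrite /= => /andP [/andP [/andP [WY oW] W2] bad].
  case: (boolP (s \in W)) => sW.
    have [c' lt'] := step3 Hm Hdeg Hd oT cY WY sW oW bad.
    by apply: (IH _ _ c'); apply: (leq_trans lt'); rewrite -ltnS.
  have [c' lt'] := step2 Hm Hdeg cY WY sW oW bad.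
  by apply: (IH _ _ c'); lia.
case: (pickP [pred W : {set T} | (W \subset Y) && ~~ odd #|W| && (1 < #|W|)%N &&
                 (d.+1 * #|W| < E m W W + 2 * E m W (~: Y))%N]) => [W | H2].
  rewrite /= => /andP [/andP [/andP [WY oW] W2] bad].
  have [c' lt'] := step1 Hm Hdeg Hd cY WY oW W2 bad.
  by apply: (IH _ _ c'); lia.
move: cY => [sY [oY [Y3 [YV [bY sl]]]]].
have YVs : Y \subset [set: T] :\ s.
  by apply/subsetP => x; rewrite !inE andbT => xY; apply/eqP => xs; move: sY; rewrite -xs xY.
have cVs : #|[set: T] :\ s| = #|T|.-1.
  by have := cardsD1 s [set: T]; rewrite inE cardsT; lia.
have pr : Y \proper [set: T] :\ s by rewrite properEneq YV YVs.
have := proper_card pr; rewrite cVs => cY.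
exists Y; split => //; first by lia.
  apply: shrink_good => //; first by rewrite bndE.
  move=> W0 H3 H4 H5; have := H1 W0; rewrite /= H3 H4 H5 /= => /negbT; rewrite -leqNgt; exact: id.
apply: shrink_good => //.
  by rewrite bndE setCK E_sym.
move=> W0; rewrite setCK => H3 H4 H5; have := H2 W0; rewrite /= H3 H4 H5 /= => /negbT; rewrite -leqNgt; exact: id.
Qed.

Unset Implicit Arguments.

Theorem mainTheorem8 (T : finType) (m : T -> T -> nat) (d r : nat) (s : T) :
  multigraph m ->
  ~~ odd #|T| -> (4 <= #|T|)%N -> (2 <= d)%N ->
  (deg [set: T] m s <= d)%N ->
  (forall v, v != s -> deg [set: T] m v = d \/ deg [set: T] m v = d.+1) ->
  nb_deg [set: T] m d.+1 = r -> (r <= d)%N ->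
  (exists R : {set T}, [/\ R \proper [set: T] :\ s, odd #|R|, (3 <= #|R|)%N,
      (bnd [set: T] m R <= d)%N &
      (slack R m d <= slack ([set: T] :\ s) m d)%R]) ->
  (Gam [set: T] m <= (d.+1)%:R)%R ->
  exists S : {set T}, [/\ odd #|S|, (1 < #|S|)%N, (#|S| < #|T|.-1)%N,
    [/\ (maxdeg (shrinkV S) (shrinkM S m) <= d.+1)%N,
        (Gam (shrinkV S) (shrinkM S m) <= (d.+1)%:R)%R &
        (nb_deg (shrinkV S) (shrinkM S m) d.+1 <= r)%N] &
    [/\ (maxdeg (shrinkV (~: S)) (shrinkM (~: S) m) <= d.+1)%N,
        (Gam (shrinkV (~: S)) (shrinkM (~: S) m) <= (d.+1)%:R)%R &
        (nb_deg (shrinkV (~: S)) (shrinkM (~: S) m) d.+1 <= r)%N]].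
Proof.
move=> Hm oT p4 d2 Hs Hdv Hr rd [R [pR oR R3 bR slR]] HGam.
have Hdeg : forall v, (deg [set: T] m v <= d.+1)%N.
  move=> v; case: (boolP (v == s)) => [/eqP -> | vs]; first by lia.
  by case: (Hdv v vs) => ->.
have Hd : forall v, v != s -> (d <= deg [set: T] m v)%N.
  by move=> v vs; case: (Hdv v vs) => ->.
have HG : forall W : {set T}, odd #|W| -> (3 <= #|W|)%N -> (E m W W <= d.+1 * #|W|.-1)%N.
  move=> W oW W3.
  have := le_trans (@Gam_ge _ [set: T] W m (subsetT W) oW W3) HGam.
  by rewrite tK_le //; lia.
have cR : cand m d s R.
  have RVs := proper_sub pR.
  split; [|split; [|split; [|split; [|split]]]] => //.
  - by apply/negP => /(subsetP RVs); rewrite !inE eqxx.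
  - by move: pR; rewrite properEneq => /andP [].
  - by rewrite -bndE.
  - by have := slack_nat slR; rewrite !ecountE.
exact: (main_ind Hm Hdeg Hd oT Hr HG (ltnSn _) cR).
Qed.
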